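(* Let $b_1,\dots,b_k$ be positive integers and let $[c_1,\dots,c_k]$ be a permutation (rearrangement) of the list $[b_1,\dots,b_k]$. Then $\operatorname{op}_{[b_1,\dots,b_k]}(123)=\operatorname{op}_{[c_1,\dots,c_k]}(123)$.
   Context: An ordered set partition of $[N]$ into $k$ blocks is a sequence $B_1/B_2/\cdots/B_k$ of nonempty, pairwise disjoint subsets of $[N]$ whose union is $[N]$; the order of the blocks matters, but not the order of elements within a block. For a permutation $\rho=\rho_1\cdots\rho_m\in\mathcal{S}_m$, an ordered partition $B_1/\cdots/B_k$ contains $\rho$ if there are block indices $i_1<i_2<\cdots<i_m$ and elements $b_j\in B_{i_j}$ such that $b_1\cdots b_m$ is order-isomorphic to $\rho$ (i.e. $b_a<b_c$ iff $\rho_a<\rho_c$); otherwise it avoids $\rho$. For positive integers $b_1,\dots,b_k$, $\operatorname{op}_{[b_1,\dots,b_k]}(\rho)$ denotes the number of ordered partitions $B_1/\cdots/B_k$ of $[b_1+\cdots+b_k]$ with $|B_i|=b_i$ for all $i$ that avoid $\rho$. *)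

(* Defs.v *)
From mathcomp Require Import all_boot all_order all_fingroup.
Set Implicit Arguments. Unset Strict Implicit. Unset Printing Implicit Defensive.

(* Ground set [N] is represented by 'I_N = {0,...,N-1} (order-isomorphic to {1..N}). *)

Definition is_osp (N k : nat) (b : 'I_k -> nat) (B : {ffun 'I_k -> {set 'I_N}}) : bool :=
  [forall i, B i != set0] &&
  [forall i, forall j, (i != j) ==> [disjoint B i & B j]] &&
  (\bigcup_(i < k) B i == [set: 'I_N]) &&
  [forall i, #|B i| == b i].

Definition osp_contains (N k m : nat) (B : {ffun 'I_k -> {set 'I_N}}) (rho : 'S_m) : bool :=
  [exists ix : {ffun 'I_m -> 'I_k}, exists e : {ffun 'I_m -> 'I_N},
     [forall a : 'I_m, forall c : 'I_m, (a < c)%N ==> (ix a < ix c)%N] &&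
     [forall a : 'I_m, e a \in B (ix a)] &&
     [forall a : 'I_m, forall c : 'I_m, ((e a < e c)%N == (rho a < rho c)%N)]].

Definition op (bs : seq nat) (m : nat) (rho : 'S_m) : nat :=
  #|[pred B : {ffun 'I_(size bs) -> {set 'I_(sumn bs)}} |
      is_osp (fun i => nth 0 bs i) B && ~~ osp_contains B rho]|.

(* The pattern 123 in S_3 (0-based: the identity permutation). *)
Definition p123 : 'S_3 := 1%g.

(* Main.v *)
Require Import Defs.
From mathcomp Require Import all_boot all_order all_fingroup.
From mathcomp Require Import zify.
Set Implicit Arguments. Unset Strict Implicit. Unset Printing Implicit Defensive.

Lemma enum_sorted N (C : {set 'I_N}) : sorted (fun a b : 'I_N => (a < b)%N) (enum C).
Proof.
rewrite -deprecated_filter_index_enum.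
apply: sorted_filter; first by move=> a b c; apply: ltn_trans.
have -> : index_enum 'I_N = enum 'I_N by rewrite enumT.
have := iota_ltn_sorted 0 N; rewrite -val_enum_ord sorted_map; exact.
Qed.

Definition rv N (C : {set 'I_N}) (s : 'I_N) : 'I_N :=
  nth s (rev (enum C)) (index s (enum C)).

Lemma idx_lt N (C : {set 'I_N}) s : s \in C -> index s (enum C) < #|C|.
Proof. by move=> sC; rewrite cardE index_mem mem_enum. Qed.

Lemma rvE N (C : {set 'I_N}) s x0 : s \in C ->
  rv C s = nth x0 (enum C) (#|C| - (index s (enum C)).+1).
Proof.
move=> sC; have h : index s (enum C) < size (enum C) by rewrite index_mem mem_enum.
rewrite /rv nth_rev // -cardE; apply: set_nth_default; rewrite -cardE; rewrite -cardE in h. set x := index _ _ in h *. set y := #|C| in h *. lia.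
Qed.

Lemma rv_in N (C : {set 'I_N}) s : s \in C -> rv C s \in C.
Proof.
move=> sC; have h := idx_lt sC; rewrite (rvE s sC) -mem_enum; apply: mem_nth.
rewrite -cardE; set x := index _ _ in h *; set y := #|C| in h *; lia.
Qed.

Lemma rv_idx N (C : {set 'I_N}) s : s \in C ->
  index (rv C s) (enum C) = #|C| - (index s (enum C)).+1.
Proof.
move=> sC; have h := idx_lt sC; rewrite (rvE s sC) index_uniq ?enum_uniq //.
rewrite -cardE; set x := index _ _ in h *; set y := #|C| in h *; lia.
Qed.


Lemma rvK N (C : {set 'I_N}) s : s \in C -> rv C (rv C s) = s.
Proof.
move=> sC; rewrite (rvE s (rv_in sC)) rv_idx //.
have := idx_lt sC => h.
have -> : #|C| - (#|C| - (index s (enum C)).+1).+1 = index s (enum C) by lia.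
by rewrite nth_index // mem_enum.
Qed.

Lemma rv_lt N (C : {set 'I_N}) s t : s \in C -> t \in C -> (s < t)%N ->
  (rv C t < rv C s)%N.
Proof.
move=> sC tC st.
have hs := idx_lt sC; have ht := idx_lt tC.
have mono : forall i j, i < #|C| -> j < #|C| -> i < j ->
    (nth s (enum C) i < nth s (enum C) j)%N.
  move=> i j hi hj ij.
  apply: (sorted_ltn_nth (leT := fun a b : 'I_N => (a < b)%N)) => //.
  - by move=> a b c; apply: ltn_trans.
  - exact: enum_sorted.
  - by rewrite inE -cardE.
  - by rewrite inE -cardE.
have lt_idx : index s (enum C) < index t (enum C).
  rewrite ltnNge; apply/negP => le.
  move: le; rewrite leq_eqVlt => /orP [/eqP e|lt].
    have : nth s (enum C) (index t (enum C)) = nth s (enum C) (index s (enum C)) by rewrite e.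
    rewrite !nth_index ?mem_enum // => ets; move: st; rewrite ets; lia.
  have := mono _ _ ht hs lt; rewrite !nth_index ?mem_enum //; lia.
rewrite (rvE s tC) (rvE s sC); apply: mono; lia.
Qed.

Definition Lo N (L : {set 'I_N}) := [set s : 'I_N | [forall l in L, ~~ (l < s)%N]].
Definition Hi N (R : {set 'I_N}) := [set s : 'I_N | [forall r in R, ~~ (s < r)%N]].
Definition cnd N (S L R : {set 'I_N}) := [exists s in S, (s \notin Lo L) && (s \notin Hi R)].
Definition C1 N (S L R : {set 'I_N}) := if cnd S L R then S else S :\: Hi R.
Definition C2 N (S L R : {set 'I_N}) := if cnd S L R then set0 else S :\: Lo L.
Definition sg N (S L R : {set 'I_N}) (s : 'I_N) : 'I_N :=
  if s \in C1 S L R then rv (C1 S L R) s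
  else if s \in C2 S L R then rv (C2 S L R) s else s.

Lemma Lo_down N (L : {set 'I_N}) (a b : 'I_N) : (a < b)%N -> b \in Lo L -> a \in Lo L.
Proof.
move=> ab /[!inE] /forall_inP h; apply/forall_inP => l lL.
by apply/negP => la; move: (h l lL); rewrite (ltn_trans la ab).
Qed.

Lemma Hi_up N (R : {set 'I_N}) (a b : 'I_N) : (a < b)%N -> a \in Hi R -> b \in Hi R.
Proof.
move=> ab /[!inE] /forall_inP h; apply/forall_inP => r rR.
by apply/negP => br; move: (h r rR); rewrite (ltn_trans ab br).
Qed.

Lemma C1_sub N (S L R : {set 'I_N}) : C1 S L R \subset S.
Proof. by rewrite /C1; case: ifP => _ //; apply: subsetDl. Qed.

Lemma C2_sub N (S L R : {set 'I_N}) : C2 S L R \subset S.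
Proof. by rewrite /C2; case: ifP => _; [apply: sub0set | apply: subsetDl]. Qed.

Lemma C12 N (S L R : {set 'I_N}) s : s \in C1 S L R -> s \notin C2 S L R.
Proof.
rewrite /C1 /C2; case: ifPn => c; first by rewrite inE.
move=> /setDP [sS nh]; apply/negP => /setDP [_ nl].
by move: c; rewrite negb_exists => /forallP /(_ s); rewrite sS nl nh.
Qed.

Lemma sg1 N (S L R : {set 'I_N}) s : s \in C1 S L R -> sg S L R s = rv (C1 S L R) s.
Proof. by rewrite /sg => ->. Qed.

Lemma sg2 N (S L R : {set 'I_N}) s : s \in C2 S L R -> sg S L R s = rv (C2 S L R) s.
Proof. by move=> h; rewrite /sg h; case: ifPn => // /C12; rewrite h. Qed.

Lemma sgK N (S L R : {set 'I_N}) : involutive (sg S L R).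
Proof.
move=> s; case: (boolP (s \in C1 S L R)) => h1.
  by rewrite (sg1 h1) (sg1 (rv_in h1)) rvK.
case: (boolP (s \in C2 S L R)) => h2.
  by rewrite (sg2 h2) (sg2 (rv_in h2)) rvK.
by rewrite /sg (negbTE h1) (negbTE h2) (negbTE h1) (negbTE h2).
Qed.

Lemma sg_out N (S L R : {set 'I_N}) s : s \notin S -> sg S L R s = s.
Proof.
move=> sS; rewrite /sg; case: ifPn => [h|_].
  by move: sS; rewrite (subsetP (C1_sub S L R) _ h).
case: ifPn => [h|//]; by move: sS; rewrite (subsetP (C2_sub S L R) _ h).
Qed.

Lemma sg_in N (S L R : {set 'I_N}) s : s \in S -> sg S L R s \in S.
Proof.
move=> sS; case: (boolP (s \in C1 S L R)) => h1.
  by rewrite (sg1 h1); apply: (subsetP (C1_sub S L R)); apply: rv_in.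
case: (boolP (s \in C2 S L R)) => h2.
  by rewrite (sg2 h2); apply: (subsetP (C2_sub S L R)); apply: rv_in.
by rewrite /sg (negbTE h1) (negbTE h2).
Qed.

Lemma sgsgX N (S L R : {set 'I_N}) (X : {set 'I_N}) : sg S L R @: (sg S L R @: X) = X.
Proof. by rewrite -imset_comp (eq_imset _ (sgK S L R)) imset_id. Qed.

Lemma sgS N (S L R : {set 'I_N}) : sg S L R @: S = S.
Proof.
apply/setP => x; apply/imsetP/idP => [[y yS ->]|xS]; first exact: sg_in.
by exists (sg S L R x); [apply: sg_in | rewrite sgK].
Qed.

Definition upc N (C A : {set 'I_N}) :=
  forall a b : 'I_N, a \in A -> a \in C -> b \in C -> (a < b)%N -> b \in A.

Definition VV N (S L R A : {set 'I_N}) :=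
  forall a b : 'I_N, a \in A -> b \in S -> b \notin A -> (a < b)%N ->
    (a \in Lo L) && (b \in Hi R).

Lemma upc_pres N (S L R C A : {set 'I_N}) :
  C \subset S -> (forall s, s \in C -> sg S L R s = rv C s) ->
  upc C A -> upc C (sg S L R @: (S :\: A)).
Proof.
move=> CS hC uA a b /imsetP [c /setDP [cS cA] ->] aC bC ab.
have ec : c = rv C (sg S L R c) by rewrite -hC // sgK.
have cC : c \in C by rewrite ec; apply: rv_in.
have dC := rv_in bC.
have ed : sg S L R (rv C b) = b by rewrite hC // rvK.
apply/imsetP; exists (rv C b) => //.
rewrite inE (subsetP CS _ dC) andbT; apply/negP => dA.
move: cA; rewrite (uA (rv C b) c dA dC cC) //.
by have := rv_lt aC bC ab; rewrite -ec.
Qed.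

Lemma V_upc N (S L R A : {set 'I_N}) : A \subset S -> VV S L R A ->
  upc (C1 S L R) A /\ upc (C2 S L R) A.
Proof.
move=> AS V; rewrite /C1 /C2; case: ifPn => c.
  split; last by move=> a b _ _; rewrite inE.
  move=> a b aA aS bS ab; apply/negPn/negP => bA.
  have /andP [aL bH] := V a b aA bS bA ab.
  case/exists_inP: c => z zS /andP [zL zH].
  case: (boolP (z \in A)) => zA.
    case: (ltngtP z b) => [zb|bz|/val_inj ezb].
    - by have /andP [] := V z b zA bS bA zb; rewrite (negbTE zL).
    - by move: zH; rewrite (Hi_up bz bH).
    - by move: zH; rewrite ezb bH.
  case: (ltngtP a z) => [az|za|/val_inj eaz].
  - by have /andP [] := V a z aA zS zA az; rewrite (negbTE zH).
  - by move: zL; rewrite (Lo_down za aL).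
  - by move: zA; rewrite -eaz aA.
split.
  move=> a b aA _ /setDP [bS bH] ab; apply/negPn/negP => bA.
  by have /andP [] := V a b aA bS bA ab; rewrite (negbTE bH).
move=> a b aA /setDP [_ aL] /setDP [bS _] ab; apply/negPn/negP => bA.
by have /andP [] := V a b aA bS bA ab; rewrite (negbTE aL).
Qed.

Lemma upc_V N (S L R A : {set 'I_N}) : A \subset S ->
  upc (C1 S L R) A -> upc (C2 S L R) A -> VV S L R A.
Proof.
move=> AS; rewrite /C1 /C2; case: ifPn => c u1 u2 a b aA bS bA ab.
  by move: bA; rewrite (u1 a b aA (subsetP AS _ aA) bS ab).
apply/andP; split.
  apply/negPn/negP => aL.
  have bL : b \notin Lo L by apply/negP => /(Lo_down ab); rewrite (negbTE aL).
  by move: bA; rewrite (u2 a b aA) // inE ?aL ?bL ?bS ?(subsetP AS _ aA).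
apply/negPn/negP => bH.
have aH : a \notin Hi R by apply/negP => /(Hi_up ab); rewrite (negbTE bH).
by move: bA; rewrite (u1 a b aA) // inE ?aH ?bH ?bS ?(subsetP AS _ aA).
Qed.

Lemma VV_pres N (S L R A : {set 'I_N}) : A \subset S -> VV S L R A ->
  VV S L R (sg S L R @: (S :\: A)).
Proof.
move=> AS V; have [u1 u2] := V_upc AS V.
apply: upc_V.
- by apply: (subset_trans (imsetS _ (subsetDl S A))); rewrite sgS.
- apply: upc_pres => //; [exact: C1_sub | exact: sg1].
- apply: upc_pres => //; [exact: C2_sub | exact: sg2].
Qed.

Definition LB k N (jj : 'I_k) (B : {ffun 'I_k -> {set 'I_N}}) :=
  \bigcup_(i : 'I_k | (i < jj)%N) B i.
Definition RB k N (jp : 'I_k) (B : {ffun 'I_k -> {set 'I_N}}) :=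
  \bigcup_(i : 'I_k | (jp < i)%N) B i.
Definition sgB k N (jj jp : 'I_k) (B : {ffun 'I_k -> {set 'I_N}}) :=
  sg (B jj :|: B jp) (LB jj B) (RB jp B).
Definition Phi k N (jj jp : 'I_k) (B : {ffun 'I_k -> {set 'I_N}}) :
  {ffun 'I_k -> {set 'I_N}} :=
  [ffun i => if i == jj then sgB jj jp B @: B jp
             else if i == jp then sgB jj jp B @: B jj else B i].
Definition swp k (jj jp i : 'I_k) := if i == jj then jp else if i == jp then jj else i.

Definition pat k N (B : {ffun 'I_k -> {set 'I_N}}) :=
  exists (i1 i2 i3 : 'I_k) (x1 x2 x3 : 'I_N),
    [/\ (i1 < i2 < i3)%N, x1 \in B i1, x2 \in B i2, x3 \in B i3 & (x1 < x2 < x3)%N].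

Lemma Phi_out k N (jj jp : 'I_k) (B : {ffun 'I_k -> {set 'I_N}}) i :
  i != jj -> i != jp -> Phi jj jp B i = B i.
Proof. by move=> h1 h2; rewrite ffunE (negbTE h1) (negbTE h2). Qed.

Lemma ne_ord k (i j : 'I_k) : (nat_of_ord i != nat_of_ord j) -> i != j.
Proof. by apply: contraNN => /eqP ->. Qed.

Lemma Phi_sgB k N (jj jp : 'I_k) (hj : nat_of_ord jp = (nat_of_ord jj).+1)
  (B : {ffun 'I_k -> {set 'I_N}}) : sgB jj jp (Phi jj jp B) = sgB jj jp B.
Proof.
have njp : jp != jj by apply: ne_ord; rewrite hj; lia.
have eL : LB jj (Phi jj jp B) = LB jj B.
  apply: eq_bigr => i ij; rewrite Phi_out // ne_ord //; move: ij; rewrite ?hj; lia.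
have eR : RB jp (Phi jj jp B) = RB jp B.
  apply: eq_bigr => i ij; rewrite Phi_out // ne_ord //; move: ij; rewrite ?hj; lia.
have eS : Phi jj jp B jj :|: Phi jj jp B jp = B jj :|: B jp.
  rewrite !ffunE eqxx (negbTE njp) eqxx setUC -imsetU.
  by rewrite /sgB sgS.
by rewrite /sgB eL eR eS.
Qed.

Lemma PhiK k N (jj jp : 'I_k) (hj : nat_of_ord jp = (nat_of_ord jj).+1)
  (B : {ffun 'I_k -> {set 'I_N}}) : Phi jj jp (Phi jj jp B) = B.
Proof.
have njp : jp != jj by apply: ne_ord; rewrite hj; lia.
apply/ffunP => i; rewrite {1}/Phi ffunE Phi_sgB //.
case: ifPn => [/eqP ->|h1].
  by rewrite ffunE (negbTE njp) eqxx sgsgX.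
case: ifPn => [/eqP ->|h2]; first by rewrite ffunE eqxx sgsgX.
by rewrite Phi_out.
Qed.

Definition rel k (jj jp i i' : 'I_k) :=
  (((i==jj)||(i==jp)) ==> ((i'==jj)||(i'==jp))) && (~~((i==jj)||(i==jp)) ==> (i'==i)).

Lemma ord_conv k (jj jp i i2 i' i2' : 'I_k) : nat_of_ord jp = (nat_of_ord jj).+1 ->
  (i < i2)%N -> ~~((i == jj) && (i2 == jp)) -> rel jj jp i i' -> rel jj jp i2 i2' ->
  (i' < i2')%N.
Proof. rewrite /rel => hj; rewrite -!(inj_eq val_inj) /=; lia. Qed.

Definition disj k N (B : {ffun 'I_k -> {set 'I_N}}) :=
  forall i j : 'I_k, i != j -> [disjoint B i & B j].

Lemma disjN k N (B : {ffun 'I_k -> {set 'I_N}}) i j x :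
  disj B -> i != j -> x \in B i -> x \notin B j.
Proof. by move=> dB ij xi; rewrite (disjointFr (dB i j ij) xi). Qed.

Lemma noPat_VV k N (jj jp : 'I_k) (hj : nat_of_ord jp = (nat_of_ord jj).+1)
  (B : {ffun 'I_k -> {set 'I_N}}) :
  ~ pat B -> VV (B jj :|: B jp) (LB jj B) (RB jp B) (B jj).
Proof.
move=> np a b aA /setUP [bA'|bB] bA ab; first by rewrite bA' in bA.
apply/andP; split.
  rewrite inE; apply/forall_inP => l /bigcupP [i ij lB]; apply/negP => la.
  apply: np; exists i, jj, jp, l, a, b; split => //; apply/andP; split => //; lia.
rewrite inE; apply/forall_inP => r /bigcupP [i ij rB]; apply/negP => br.
apply: np; exists jj, jp, i, a, b, r; split => //; apply/andP; split => //; lia.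
Qed.

Lemma conv k N (jj jp : 'I_k) (B : {ffun 'I_k -> {set 'I_N}}) i x :
  x \in Phi jj jp B i -> exists i', x \in B i' /\ rel jj jp i i'.
Proof.
rewrite /rel ffunE.
have hS : forall X : {set 'I_N}, X \subset B jj :|: B jp -> x \in sgB jj jp B @: X ->
    exists i', x \in B i' /\ ((i' == jj) || (i' == jp)).
  move=> X XS xX.
  have : x \in B jj :|: B jp.
    by have := subsetP (imsetS (sgB jj jp B) XS) x xX; rewrite /sgB sgS.
  case/setUP => h; [exists jj | exists jp]; by rewrite h eqxx ?orbT.
case: ifPn => [/eqP ei xX|h1].
  have [i' [? hi]] := hS _ (subsetUr _ _) xX; exists i'; split => //; subst i.
  by rewrite /= ?hi ?implybT.
case: ifPn => [/eqP ei xX|h2].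
  have [i' [? hi]] := hS _ (subsetUl _ _) xX; exists i'; split => //; subst i.
  by rewrite /= ?orbT ?hi ?implybT.
by move=> xB; exists i; rewrite /= eqxx.
Qed.

Lemma noPat_Phi k N (jj jp : 'I_k) (hj : nat_of_ord jp = (nat_of_ord jj).+1)
  (B : {ffun 'I_k -> {set 'I_N}}) :
  disj B -> ~ pat B -> ~ pat (Phi jj jp B).
Proof.
move=> dB np.
have njp : jp != jj by apply: ne_ord; rewrite hj; lia.
have njj : jj != jp by rewrite eq_sym.
set S := B jj :|: B jp.
have eSA : S :\: B jj = B jp.
  apply/setP => x; rewrite !inE; case: (boolP (x \in B jp)) => h; last by rewrite orbF; case: (x \in B jj).
  by rewrite orbT andbT (disjN dB njp h).
have V' := VV_pres (subsetUl (B jj) (B jp)) (noPat_VV hj np).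
rewrite eSA in V'.
have Pjj : Phi jj jp B jj = sgB jj jp B @: B jp by rewrite ffunE eqxx.
have Pjp : Phi jj jp B jp = sgB jj jp B @: B jj by rewrite ffunE (negbTE njp) eqxx.
have key : forall x, x \in Phi jj jp B jp -> (x \in S) && (x \notin sgB jj jp B @: B jp).
  move=> x; rewrite Pjp => /imsetP [c cB ->]; apply/andP; split.
    by apply: sg_in; rewrite inE cB.
  apply/negP => /imsetP [d dBp /(can_inj (sgK _ _ _)) ecd].
  by move: (disjN dB njj cB); rewrite ecd dBp.
move=> [i1 [i2 [i3 [x1 [x2 [x3 [/andP [i12 i23] h1 h2 h3 /andP [x12 x23]]]]]]]].
case: (boolP ((i1 == jj) && (i2 == jp))) => [/andP [/eqP e1 /eqP e2]|c12].
  subst i1 i2.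
  have /andP [x2S x2n] := key x2 h2.
  have hx1 : x1 \in sgB jj jp B @: B jp by rewrite -Pjj.
  have /andP [_] := V' x1 x2 hx1 x2S x2n x12; rewrite inE => /forall_inP hH.
  have x3R : x3 \in RB jp B.
    apply/bigcupP; exists i3 => //; rewrite Phi_out // in h3; apply: ne_ord; lia.
  by move: (hH x3 x3R); rewrite x23.
case: (boolP ((i2 == jj) && (i3 == jp))) => [/andP [/eqP e1 /eqP e2]|c23].
  subst i2 i3.
  have /andP [x3S x3n] := key x3 h3.
  have hx2 : x2 \in sgB jj jp B @: B jp by rewrite -Pjj.
  have /andP [+ _] := V' x2 x3 hx2 x3S x3n x23; rewrite inE => /forall_inP hL.
  have x1L : x1 \in LB jj B.
    apply/bigcupP; exists i1 => //; rewrite Phi_out // in h1; apply: ne_ord; lia.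
  by move: (hL x1 x1L); rewrite x12.
have [j1 [b1 r1]] := conv h1.
have [j2 [b2 r2]] := conv h2.
have [j3 [b3 r3]] := conv h3.
apply: np; exists j1, j2, j3, x1, x2, x3; split => //.
  by rewrite (ord_conv hj i12 c12 r1 r2) (ord_conv hj i23 c23 r2 r3).
by rewrite x12 x23.
Qed.

Lemma contP k N (B : {ffun 'I_k -> {set 'I_N}}) : osp_contains B p123 -> pat B.
Proof.
case/existsP => ix /existsP [e /andP [/andP [h1 h2] h3]].
pose o0 : 'I_3 := Ordinal (isT : 0 < 3).
pose o1 : 'I_3 := Ordinal (isT : 1 < 3).
pose o2 : 'I_3 := Ordinal (isT : 2 < 3).
have hi : forall a c : 'I_3, (a < c)%N -> (ix a < ix c)%N.
  by move=> a c ac; move/forallP: h1 => /(_ a) /forallP /(_ c) /implyP; apply.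
have he : forall a c : 'I_3, (a < c)%N -> (e a < e c)%N.
  move=> a c ac; move/forallP: h3 => /(_ a) /forallP /(_ c) /eqP ->.
  by rewrite /p123 !perm1.
have hb : forall a, e a \in B (ix a) by move=> a; move/forallP: h2; apply.
exists (ix o0), (ix o1), (ix o2), (e o0), (e o1), (e o2); split => //.
  by rewrite !hi.
by rewrite !he.
Qed.

Lemma patC k N (B : {ffun 'I_k -> {set 'I_N}}) : pat B -> osp_contains B p123.
Proof.
move=> [i1 [i2 [i3 [x1 [x2 [x3 [/andP [i12 i23] h1 h2 h3 /andP [x12 x23]]]]]]]].
apply/existsP; exists [ffun a : 'I_3 => if val a == 0 then i1 else if val a == 1 then i2 else i3].
apply/existsP; exists [ffun a : 'I_3 => if val a == 0 then x1 else if val a == 1 then x2 else x3].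
apply/andP; split; first (apply/andP; split).
- apply/forallP => -[[|[|[|a]]] ha]; apply/forallP => -[[|[|[|c]]] hc]; rewrite !ffunE //= ; lia.
- by apply/forallP => -[[|[|[|a]]] ha]; rewrite !ffunE.
- apply/forallP => -[[|[|[|a]]] ha]; apply/forallP => -[[|[|[|c]]] hc]; rewrite !ffunE /p123 !perm1 //=; apply/eqP; lia.
Qed.

Lemma swpK k (jj jp : 'I_k) : jj != jp -> involutive (swp jj jp).
Proof.
move=> n i; have n' : jp != jj by rewrite eq_sym.
rewrite /swp; case: (eqVneq i jj) => [->|h1]; first by rewrite !eqxx ?(negbTE n') ?eqxx.
case: (eqVneq i jp) => [->|h2]; first by rewrite eqxx.
by rewrite (negbTE h1) (negbTE h2).
Qed.

Lemma PhiE k N (jj jp : 'I_k) (B : {ffun 'I_k -> {set 'I_N}}) i :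
  disj B -> Phi jj jp B i = sgB jj jp B @: B (swp jj jp i).
Proof.
move=> dB; rewrite ffunE /swp; case: ifPn => // h1; case: ifPn => // h2.
apply/setP => x; apply/idP/imsetP => [xB|[y yB ->]].
  exists x => //; rewrite /sgB sg_out // inE negb_or.
  by rewrite (disjN dB h1 xB) (disjN dB h2 xB).
rewrite /sgB sg_out // inE negb_or.
by rewrite (disjN dB h1 yB) (disjN dB h2 yB).
Qed.

Lemma osp_disj N k (b : 'I_k -> nat) (B : {ffun 'I_k -> {set 'I_N}}) :
  is_osp b B -> disj B.
Proof.
move=> /andP [/andP [/andP [_ dj] _] _] i j ij.
by move/forallP: dj => /(_ i) /forallP /(_ j) /implyP; apply.
Qed.

Lemma sgB_inj k N (jj jp : 'I_k) (B : {ffun 'I_k -> {set 'I_N}}) : injective (sgB jj jp B).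
Proof. exact: can_inj (sgK _ _ _). Qed.

Lemma osp_Phi N k (jj jp : 'I_k) (b b' : 'I_k -> nat) (B : {ffun 'I_k -> {set 'I_N}}) :
  jj != jp -> (forall i, b' i = b (swp jj jp i)) ->
  is_osp b B -> is_osp b' (Phi jj jp B).
Proof.
move=> n hb o; have dB := osp_disj o.
move: o => /andP [/andP [/andP [ne dj] un] sz].
have inj := @sgB_inj k N jj jp B.
apply/andP; split; first (apply/andP; split; first (apply/andP; split)).
- apply/forallP => i; rewrite PhiE // imset_eq0.
  by move/forallP: ne; apply.
- apply/forallP => i; apply/forallP => j; apply/implyP => ij.
  rewrite !PhiE // -setI_eq0 -imsetI; last by move=> x y _ _; apply: inj.
  rewrite imset_eq0 setI_eq0; apply: dB.
  by apply: contraNN ij => /eqP /(can_inj (swpK n)) ->.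
- apply/eqP/setP => x; rewrite inE; apply/bigcupP.
  have : sgB jj jp B x \in \bigcup_(i < k) B i by rewrite (eqP un) inE.
  case/bigcupP => i0 _ hx; exists (swp jj jp i0) => //.
  rewrite PhiE // swpK //; apply/imsetP; exists (sgB jj jp B x) => //.
  by rewrite /sgB sgK.
- apply/forallP => i; rewrite PhiE // card_imset // hb.
  by move/forallP: sz; apply.
Qed.

Definition opG N k (b : 'I_k -> nat) :=
  #|[pred B : {ffun 'I_k -> {set 'I_N}} | is_osp b B && ~~ osp_contains B p123]|.

Lemma opG_le N k (jj jp : 'I_k) (hj : nat_of_ord jp = (nat_of_ord jj).+1)
  (b b' : 'I_k -> nat) : (forall i, b' i = b (swp jj jp i)) ->
  opG N b <= opG N b'.
Proof.
move=> hb; have n : jj != jp by apply: ne_ord; rewrite hj; lia.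
rewrite /opG -(card_imset _ (can_inj (PhiK hj))).
apply: subset_leq_card; apply/subsetP => B' /imsetP [B /andP [oB cB] ->].
rewrite inE; apply/andP; split; first exact: osp_Phi oB.
apply/negP => /contP; apply: noPat_Phi => //; first exact: osp_disj oB.
by move/patC; apply/negP.
Qed.

Lemma opG_swap N k (jj jp : 'I_k) (hj : nat_of_ord jp = (nat_of_ord jj).+1)
  (b b' : 'I_k -> nat) : (forall i, b' i = b (swp jj jp i)) ->
  opG N b = opG N b'.
Proof.
move=> hb; have n : jj != jp by apply: ne_ord; rewrite hj; lia.
have hb' : forall i, b i = b' (swp jj jp i) by move=> i; rewrite hb swpK.
by apply/eqP; rewrite eqn_leq (opG_le N hj hb) (opG_le N hj hb').
Qed.

Lemma opE (bs : seq nat) : op bs p123 = opG (sumn bs) (fun i : 'I_(size bs) => nth 0 bs i).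
Proof. by []. Qed.

Lemma opG_cast N N' k k' (eN : N = N') (ek : k = k') (b : 'I_k -> nat) (b' : 'I_k' -> nat) :
  (forall i : 'I_k, b i = b' (cast_ord ek i)) -> opG N b = opG N' b'.
Proof.
subst N' k' => hb; apply: eq_card => B; rewrite !inE.
have -> : is_osp b B = is_osp b' B.
  by rewrite /is_osp; congr (_ && _); apply: eq_forallb => i; rewrite hb cast_ord_id.
by [].
Qed.

Lemma nth_swap (l r : seq nat) x y i : i != size l -> i != (size l).+1 ->
  nth 0 (l ++ x :: y :: r) i = nth 0 (l ++ y :: x :: r) i.
Proof.
move=> h1 h2; rewrite !nth_cat; case: ifP => // /negbT; rewrite -leqNgt => h.
case E : (i - size l) => [|[|m]] //; lia.
Qed.

Lemma op_swap (l r : seq nat) x y :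
  op (l ++ x :: y :: r) p123 = op (l ++ y :: x :: r) p123.
Proof.
set s1 := l ++ x :: y :: r; set s2 := l ++ y :: x :: r.
have ek : size s2 = size s1 by rewrite !size_cat.
have eN : sumn s2 = sumn s1 by rewrite /s1 /s2 !sumn_cat /=; lia.
rewrite !opE (opG_cast eN (ek := ek) (b' := fun i : 'I_(size s1) => nth 0 s2 i)) //.
have hl : size l < size s1 by rewrite size_cat /=; lia.
have hl1 : (size l).+1 < size s1 by rewrite size_cat /=; lia.
pose jj : 'I_(size s1) := Ordinal hl.
pose jp : 'I_(size s1) := Ordinal hl1.
apply: (@opG_swap _ _ jj jp) => // i.
rewrite /swp; case: (eqVneq i jj) => [->|h1].
  by rewrite /= /s1 /s2 !nth_cat ?ltnn ?(ltnNge (size l).+1) ?leqnSn ?subnn ?subSnn.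
case: (eqVneq i jp) => [->|h2].
  by rewrite /= /s1 /s2 !nth_cat ?ltnn ?(ltnNge (size l).+1) ?leqnSn ?subnn ?subSnn.
by rewrite nth_swap.
Qed.

Lemma op_move (l t1 t2 : seq nat) x :
  op (l ++ x :: t1 ++ t2) p123 = op (l ++ t1 ++ x :: t2) p123.
Proof.
elim: t1 l => [|a t1 IH] l //=.
rewrite op_swap; have := IH (l ++ [:: a]); rewrite -!catA /=; exact.
Qed.

Lemma op_perm (s t : seq nat) l : perm_eq s t -> op (l ++ s) p123 = op (l ++ t) p123.
Proof.
elim: s t l => [|x s IH] t l.
  by move=> /perm_size; case: t.
move=> pst.
have xt : x \in t by rewrite -(perm_mem pst) mem_head.
case/splitPr: xt pst => t1 t2 pst.
have ps : perm_eq s (t1 ++ t2).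
  by rewrite -(perm_cons x); apply: (perm_trans pst); rewrite (perm_catCA t1 [:: x] t2).
rewrite -op_move; have := IH _ (l ++ [:: x]) ps; rewrite -!catA /=; exact.
Qed.

Theorem lemma1 (bs cs : seq nat) :
  all (fun x => 0 < x) bs -> perm_eq bs cs ->
  op bs p123 = op cs p123.
Proof. by move=> _ p; exact: (op_perm [::] p). Qed.
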